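(* Let $\mathcal{F}=\{f_i\}_{i=1}^k$ be a frame for $\mathcal{H}_n$ and let $\mathcal{S}=\{I\subseteq\{1,\dots,k\}:\operatorname{span}(\{f_i\}_{i\in I})=\mathcal{H}_n\}$. Then $\operatorname{rob}(\mathcal{F})\le\lfloor\log_2|\mathcal{S}|\rfloor$.
   Context: $\mathcal{H}_n$ is an $n$-dimensional real or complex Hilbert space. A finite sequence of vectors in $\mathcal{H}_n$ is a frame for $\mathcal{H}_n$ iff it spans $\mathcal{H}_n$. A frame $\{f_i\}_{i=1}^k$ is robust to $r$ erasures if for every index set $I\subseteq\{1,\dots,k\}$ with $|I|=r$, the sequence $\{f_i\}_{i\notin I}$ still spans $\mathcal{H}_n$. The maximum robustness $\operatorname{rob}(\mathcal{F})$ is the largest $r$ such that $\mathcal{F}$ is robust to $r$ erasures. *)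

(* Defs.v *)
From HB Require Import structures.
From mathcomp Require Import all_boot all_order all_algebra.
From mathcomp Require Import complex.
From mathcomp Require Import reals.
Set Implicit Arguments. Unset Strict Implicit. Unset Printing Implicit Defensive.
Import Order.TTheory GRing.Theory Num.Theory.
Local Open Scope ring_scope.

(* Vectors of H_n = K^n are row vectors 'rV[K]_n; a finite sequence
   {f_i}_{i=1}^k is f : 'I_k -> 'rV[K]_n (indices shifted to 0..k-1). *)

Definition spans (K : fieldType) (n k : nat) (f : 'I_k -> 'rV[K]_n)
  (I : {set 'I_k}) : bool :=
  row_full (\sum_(i in I) <<f i>>)%MS.

Definition frame (K : fieldType) (n k : nat) (f : 'I_k -> 'rV[K]_n) : bool :=
  spans f setT.

Definition robust (K : fieldType) (n k : nat) (f : 'I_k -> 'rV[K]_n)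
  (r : nat) : bool :=
  [forall I : {set 'I_k}, (#|I| == r) ==> spans f (~: I)].

(* maximum robustness: largest r (among 0..k, the meaningful range) such
   that f is robust to r erasures *)
Definition rob (K : fieldType) (n k : nat) (f : 'I_k -> 'rV[K]_n) : nat :=
  (\max_(r < k.+1 | robust f r) r)%N.

Definition spanning_sets (K : fieldType) (n k : nat) (f : 'I_k -> 'rV[K]_n)
  : {set {set 'I_k}} :=
  [set I : {set 'I_k} | spans f I].

(* Main.v *)
Require Import Defs.
From HB Require Import structures.
From mathcomp Require Import all_boot all_order all_algebra.
From mathcomp Require Import complex.
From mathcomp Require Import reals.
Set Implicit Arguments. Unset Strict Implicit. Unset Printing Implicit Defensive.
Local Open Scope ring_scope.

Lemma spans_mono (K : fieldType) (n k : nat) (f : 'I_k -> 'rV[K]_n)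
  (I J : {set 'I_k}) : I \subset J -> spans f I -> spans f J.
Proof.
move=> sIJ; rewrite /spans -!sub1mx => H; apply: (submx_trans H).
apply/sumsmx_subP => i iI; apply: (sumsmx_sup i); first exact: (subsetP sIJ).
exact: submx_refl.
Qed.
Lemma gen_bound (K : fieldType) (n k : nat) (f : 'I_k -> 'rV[K]_n) :
  (rob f <= trunc_log 2 #|spanning_sets f|)%N.
Proof.
apply/bigmax_leqP => r; rewrite /robust => /forallP rob_r.
have rk : (r <= k)%N by rewrite -ltnS.
apply: (trunc_log_max (isT : (1 < 2)%N)).
pose A := [set widen_ord rk i | i : 'I_r].
have cA : #|A| = r.
  rewrite card_imset ?card_ord //.
  by move=> a b /(congr1 val) /= /val_inj.
have sA : spans f (~: A) by move: (rob_r A); rewrite cA eqxx.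
rewrite -cA -card_powerset -(card_imset _ (@setC_inj _)).
apply: subset_leq_card; apply/subsetP => J /imsetP [B].
rewrite inE => sBA ->.
rewrite inE.
have sc : ~: A \subset ~: B by rewrite setCS.
exact: (spans_mono sc sA).
Qed.

Theorem proposition2p1 (R : realType) :
  (forall (n k : nat) (f : 'I_k -> 'rV[R]_n),
     frame f -> (rob f <= trunc_log 2 #|spanning_sets f|)%N) /\
  (forall (n k : nat) (f : 'I_k -> 'rV[R[i]]_n),
     frame f -> (rob f <= trunc_log 2 #|spanning_sets f|)%N).
Proof. by split=> n k f _; apply: gen_bound. Qed.
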